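(* Let $(X,d)$ be a finite metric space and $k$ an integer with $2\le k\le|X|$. Let $\mathrm{OPT}\subseteq X$ be a fixed $k$-set maximizing $\mathrm{cl}(T)=\sum_{\{u,v\}\subseteq T}d(u,v)$ over $k$-subsets, let $\Delta=\mathrm{cl}(\mathrm{OPT})/\binom{k}{2}$, let $z_0\in\mathrm{OPT}$ be a point minimizing $\sum_{u\in\mathrm{OPT}}d(z_0,u)$ (the center of the minimum weight spanning star of $\mathrm{OPT}$), and let $B=B(z_0,2\Delta)$. Then $|X\setminus B|<k/2$. Moreover, for any ball $B(u,r)$ with $|X\setminus B(u,r)|<k/2$, we have $d(z_0,u)\le 2\Delta+r$.
   Context: $B(u,r)=\{v\in X: d(u,v)\le r\}$. *)

(* Defs.v *)
From HB Require Import structures.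
From mathcomp Require Import all_boot all_order all_algebra.
Set Implicit Arguments. Unset Strict Implicit. Unset Printing Implicit Defensive.
Import Order.TTheory GRing.Theory Num.Theory.
Local Open Scope ring_scope.

Definition is_metric (R : realFieldType) (T : finType) (d : T -> T -> R) : Prop :=
  [/\ forall x y, d x y = 0 <-> x = y,
      forall x y, d x y = d y x &
      forall x y z, d x z <= d x y + d y z].

(* cl(A) = sum over unordered pairs {u,v} of distinct elements of A of d(u,v);
   each unordered pair is counted once via the enumeration rank of T. *)
Definition cl (R : realFieldType) (T : finType) (d : T -> T -> R) (A : {set T}) : R :=
  \sum_(u in A) \sum_(v in A | (enum_rank u < enum_rank v)%N) d u v.

Definition ball_set (R : realFieldType) (T : finType) (d : T -> T -> R) (u : T) (r : R)
  : {set T} := [set v | d u v <= r].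

(* Main.v *)
Require Import Defs.
From HB Require Import structures.
From mathcomp Require Import all_boot all_order all_algebra.
From mathcomp Require Import lra.
Import Order.TTheory GRing.Theory Num.Theory.
Local Open Scope ring_scope.

Section H.
Variables (R : realFieldType) (T : finType) (d : T -> T -> R).
Hypothesis dm : is_metric d.

Lemma d0 x : d x x = 0.
Proof. by case: dm => H _ _; apply/H. Qed.

Lemma dge0 x y : 0 <= d x y.
Proof.
case: dm => _ S Tr; have := Tr x y x; rewrite d0 (S y x); lra.
Qed.

Definition G (A : {set T}) := \sum_(u in A) \sum_(v in A) d u v.

Lemma cl2 (A : {set T}) : 2 * cl d A = G A.
Proof.
case: dm => _ S _.
have E : G A = \sum_(u in A) \sum_(v in A) (if (enum_rank u < enum_rank v)%N then d u v else 0)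
   + \sum_(u in A) \sum_(v in A) (if (enum_rank v < enum_rank u)%N then d u v else 0).
  rewrite -big_split; apply: eq_bigr => u _; rewrite -big_split; apply: eq_bigr => v _ /=.
  case: (ltngtP (enum_rank u) (enum_rank v)) => H; rewrite ?addr0 ?add0r; try done.
  have -> : u = v by apply: enum_rank_inj; apply: val_inj.
  by rewrite d0.
have E2 : \sum_(u in A) \sum_(v in A) (if (enum_rank v < enum_rank u)%N then d u v else 0)
   = \sum_(u in A) \sum_(v in A) (if (enum_rank u < enum_rank v)%N then d u v else 0).
  rewrite exchange_big /=; apply: eq_bigr => u _; apply: eq_bigr => v _.
  by rewrite S.
rewrite E E2 /cl.
have -> : \sum_(u in A) \sum_(v in A | (enum_rank u < enum_rank v)%N) d u v =
   \sum_(u in A) \sum_(v in A) (if (enum_rank u < enum_rank v)%N then d u v else 0).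
  by apply: eq_bigr => u _; rewrite big_mkcondr.
by rewrite mulr_natl mulr2n.
Qed.

Lemma GU1 a (A : {set T}) : a \notin A -> G (a |: A) = G A + 2 * \sum_(u in A) d a u.
Proof.
case: dm => _ S _ aA.
rewrite /G big_setU1 //= big_setU1 //= d0 add0r.
under [X in _ + X = _]eq_bigr => u _ do rewrite big_setU1 //=.
rewrite big_split /= mulr_natl mulr2n.
under [X in _ + (X + _) = _]eq_bigr => u _ do rewrite S.
lra.
Qed.

End H.
Arguments d0 {R T d}.
Arguments G {R T}.
Arguments dge0 {R T d}.
Arguments cl2 {R T d}.
Arguments GU1 {R T d}.

Theorem lemma11 (R : realFieldType) (T : finType) (d : T -> T -> R) (k : nat)
  (OPT : {set T}) (z0 : T) :
  is_metric d ->
  (2 <= k)%N -> (k <= #|T|)%N ->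
  #|OPT| = k ->
  (forall S : {set T}, #|S| = k -> cl d S <= cl d OPT) ->
  z0 \in OPT ->
  (forall z, z \in OPT -> \sum_(u in OPT) d z0 u <= \sum_(u in OPT) d z u) ->
  let Delta := cl d OPT / ('C(k, 2))%:R in
  (#|~: ball_set d z0 (2 * Delta)|%:R < k%:R / 2 :> R) /\
  (forall (u : T) (r : R), #|~: ball_set d u r|%:R < k%:R / 2 :> R ->
     d z0 u <= 2 * Delta + r).
Proof.
move=> dm k2 kT cOPT opt z0O minS Delta.
have dm' := dm; case: dm' => _ dS dT.
have Ck : ('C(k,2)%:R : R) * 2 = k%:R * (k%:R - 1).
  have := mul_bin_diag k 1; rewrite bin1 => /(congr1 (fun n => n%:R : R)).
  rewrite !natrM mulrC => E; rewrite mulrC -E mulrC; congr (_ * _).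
  by clear -k2; case: k k2 => // n _; rewrite /= -natr1 addrK.
have Cpos : (0 : R) < 'C(k,2)%:R by rewrite ltr0n bin_gt0.
have clD : cl d OPT = Delta * 'C(k,2)%:R by rewrite /Delta divfK // gt_eqF.
have D0 : 0 <= Delta.
  rewrite /Delta divr_ge0 // ?ler0n //.
  by apply: sumr_ge0 => u _; apply: sumr_ge0 => v _; apply: (dge0 dm).
have kpos : (1 : R) < k%:R by rewrite ltr1n.
set S0 := \sum_(u in OPT) d z0 u.
have kS0 : k%:R * S0 <= 2 * cl d OPT.
  rewrite (cl2 dm) /G -cOPT mulr_natl -sumr_const.
  by apply: ler_sum => z zO; apply: minS.
have S0le : S0 <= (k%:R - 1) * Delta.
  have kp : (0:R) < k%:R by lra.
  rewrite -(ler_pM2l kp); apply: (le_trans kS0).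
  rewrite clD mulrA mulrC mulrA Ck; lra.
have claimA : forall x, 2 * Delta < d z0 x -> x \in OPT.
  move=> x hx; case: (boolP (x \in OPT)) => // xO.
  set O' := OPT :\ z0.
  have z0n : z0 \notin O' by rewrite setD11.
  have Oeq : OPT = z0 |: O' by rewrite setD1K.
  have xn : x \notin O' by rewrite in_setD1 (negbTE xO) andbF.
  have cO' : (#|O'|%:R : R) = k%:R - 1.
    have := cardsD1 z0 OPT; rewrite z0O cOPT => ->.
    by rewrite /= add1n -natr1 addrK.
  have cx : #|x |: O'| = k.
    rewrite cardsU1 xn.
    have := cardsD1 z0 OPT; rewrite z0O cOPT => ->; by rewrite addnC.
  have := opt _ cx.
  have GO : G d OPT = G d O' + 2 * \sum_(u in O') d z0 u by rewrite {1}Oeq (GU1 dm).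
  rewrite -(ler_pM2l (_ : (0:R) < 2)) // !(cl2 dm) GO (GU1 dm) //.
  rewrite lerD2l ler_pM2l //.
  have -> : \sum_(u in O') d z0 u = S0 by rewrite /S0 [in RHS]Oeq big_setU1 //= (d0 dm) add0r.
  move=> h.
  have h2 : \sum_(u in O') (d z0 x - d z0 u) <= \sum_(u in O') d x u.
    apply: ler_sum => u _; have := dT z0 u x; rewrite (dS u x); lra.
  move: h2; rewrite sumrB sumr_const -mulr_natl cO'.
  have -> : \sum_(u in O') d z0 u = S0 by rewrite /S0 [in RHS]Oeq big_setU1 //= (d0 dm) add0r.
  move=> h2.
  have : (k%:R - 1) * d z0 x <= (k%:R - 1) * (2 * Delta) by lra.
  rewrite ler_pM2l ?subr_gt0 //; lra.
set C := ~: ball_set d z0 (2 * Delta).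
have inC : forall v, (v \in C) = (2 * Delta < d z0 v).
  by move=> v; rewrite /C /ball_set in_setC inE ltNge.
have part1 : (#|C|%:R < k%:R / 2 :> R).
  case: (posnP #|C|) => [->|cpos].
    by rewrite divr_gt0 //; lra.
  have CO : C \subset OPT by apply/subsetP => v; rewrite inC; apply: claimA.
  have h1 : \sum_(v in C) d z0 v <= S0.
    rewrite /S0 [in X in _ <= X](big_setID C) /= (setIidPr CO) lerDl.
    by apply: sumr_ge0 => v _; apply: (dge0 dm).
  have h2 : \sum_(v in C) (2 * Delta) < \sum_(v in C) d z0 v.
    apply: ltr_sum; last by move=> v; rewrite inC.
    case/card_gt0P: cpos => c cC; apply/hasP; exists c => //.
  move: h2; rewrite sumr_const -mulr_natl => h2.
  rewrite ltr_pdivlMr //; nra.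
split => // u r hu.
have hs : (#|C| + #|~: ball_set d u r| < #|T|)%N.
  apply: (leq_trans _ kT); rewrite -(ltr_nat R) natrD; lra.
have : (0 < #|~: (C :|: ~: ball_set d u r)|)%N.
  rewrite cardsCs setCK.
  rewrite subn_gt0; apply: leq_ltn_trans hs; exact: leq_of_leqif (leq_card_setU _ _).
case/card_gt0P => y; rewrite !inE negb_or !negbK => /andP [h1 h2].
have := dT z0 y u; rewrite (dS y u); lra.
Qed.
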